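(* Let $X$ be a simplicial complex with vertex set $V$ and $1$-skeleton $\mathcal G$, and let $\hat d$ be a metric on $V$ such that for some constant $C>0$, $\hat d(u,v)\le C\,d_{\mathcal G}(u,v)$ for all $u,v\in V$. Define $\tilde d\colon X\times X\to\mathbb{R}$ by \[\tilde d(x,y)=\min\{\hat D(x,y),\,3C\,d_X(x,y)\}.\] Then $\tilde d$ is a metric on $X$. Moreover, if $x,y\in X$ have disjoint supports then $\tilde d(x,y)=\hat D(x,y)$; in particular $\tilde d(u,v)=\hat d(u,v)$ for all $u,v\in V$, so $\tilde d$ extends $\hat d$.
   Context: Points $x\in X$ have barycentric coordinates $(x_u)_{u\in V}$ (finitely many nonzero, summing to $1$); $\mathrm{supp}(x)=\{u\in V:x_u\neq0\}$. $\hat D(x,y)=\sum_{u,v\in V}x_uy_v\,\hat d(u,v)$ is the bilinear extension of $\hat d$. $d_{\mathcal G}$ is the word metric on the $1$-skeleton (every edge length $1$). For a simplex $\sigma$ and $x,y\in\sigma$, $d_\sigma(x,y)=\tfrac12\sum_{u\in V(\sigma)}|x_u-y_u|$; a path from $x$ to $y$ is a sequence $x=a_0,\dots,a_r=y$ with consecutive points in a common simplex $\sigma_i$, of length $\sum_i d_{\sigma_i}(a_{i-1},a_i)$; the $\ell^1$-path metric $d_X(x,y)$ is the infimum of lengths of such paths. *)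

(* Defs.v *)
From Stdlib Require Import Reals Lra List ClassicalEpsilon.
Import ListNotations.
Open Scope R_scope.

Set Implicit Arguments.

(* Abstract simplicial complex on vertex set V: faces are finite nonempty
   vertex lists, closed under nonempty sub-lists (as sets), every vertex
   spans a 0-simplex. *)
Record SimplicialComplex (V : Type) := {
  face : list V -> Prop;
  face_nonempty : forall s, face s -> s <> [];
  face_sub : forall s t, face t -> incl s t -> s <> [] -> face s;
  face_vertex : forall v, face [v]
}.

Definition sumL {V : Type} (s : list V) (f : V -> R) : R :=
  fold_right (fun u acc => f u + acc) 0 s.

Definition supported {V : Type} (x : V -> R) (s : list V) : Prop :=
  forall u, x u <> 0 -> In u s.

(* points of the geometric realisation X: barycentric coordinate functions,
   nonnegative, finitely supported on a simplex, summing to 1 *)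
Definition inX {V : Type} (K : SimplicialComplex V) (x : V -> R) : Prop :=
  exists s, face K s /\ NoDup s /\ supported x s /\
    (forall u, 0 <= x u) /\ sumL s x = 1.

Definition is_metric_on {T : Type} (P : T -> Prop) (d : T -> T -> R) : Prop :=
  (forall x y, P x -> P y -> 0 <= d x y) /\
  (forall x y, P x -> P y -> (d x y = 0 <-> x = y)) /\
  (forall x y, P x -> P y -> d x y = d y x) /\
  (forall x y z, P x -> P y -> P z -> d x z <= d x y + d y z).

Inductive walk {V : Type} (K : SimplicialComplex V) : V -> V -> nat -> Prop :=
| walk_nil u : walk K u u 0
| walk_cons u w v n : face K [u; w] -> walk K w v n -> walk K u v (S n).

(* d_G(u,v) = n (word metric in the 1-skeleton, finite case) *)
Definition dG_is {V : Type} (K : SimplicialComplex V) (u v : V) (n : nat) : Prop :=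
  walk K u v n /\ (forall m, walk K u v m -> (n <= m)%nat).

Definition dsum {V : Type} (dh : V -> V -> R) (s : list V) (x y : V -> R) : R :=
  sumL s (fun u => sumL s (fun v => x u * y v * dh u v)).

(* bilinear extension \hat D(x,y) = sum_{u,v in V} x_u y_v dh(u,v), computed
   over any duplicate-free list covering both supports *)
Definition Dhat {V : Type} (dh : V -> V -> R) (x y : V -> R) : R :=
  epsilon (inhabits 0) (fun r => exists s, NoDup s /\ supported x s /\
           supported y s /\ r = dsum dh s x y).

Definition dsig {V : Type} (s : list V) (x y : V -> R) : R :=
  / 2 * sumL s (fun u => Rabs (x u - y u)).

(* pathlen K x z L : there is a path x = a_0, ..., a_r = z in X of length L,
   consecutive points lying in a common simplex *)
Inductive pathlen {V : Type} (K : SimplicialComplex V) :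
  (V -> R) -> (V -> R) -> R -> Prop :=
| path_nil x : inX K x -> pathlen K x x 0
| path_cons x y z s L :
    face K s -> NoDup s -> inX K x -> inX K y ->
    supported x s -> supported y s ->
    pathlen K y z L -> pathlen K x z (dsig s x y + L).

Definition is_inf (E : R -> Prop) (m : R) : Prop :=
  (forall r, E r -> m <= r) /\ (forall b, (forall r, E r -> b <= r) -> b <= m).

(* l^1 path metric: Some (infimum of path lengths), or None (= +infinity)
   when no path exists *)
Definition dX {V : Type} (K : SimplicialComplex V) (x y : V -> R) : option R :=
  if excluded_middle_informative (exists L, pathlen K x y L)
  then Some (epsilon (inhabits 0) (is_inf (pathlen K x y)))
  else None.

(* \tilde d(x,y) = min { \hat D(x,y), 3 C d_X(x,y) }  (min with +infinity
   is \hat D) *)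
Definition dtilde {V : Type} (K : SimplicialComplex V) (dh : V -> V -> R) (C : R)
  (x y : V -> R) : R :=
  match dX K x y with
  | Some r => Rmin (Dhat dh x y) (3 * C * r)
  | None => Dhat dh x y
  end.

Definition vertex_pt {V : Type} (u : V) : V -> R :=
  fun w => if excluded_middle_informative (w = u) then 1 else 0.

(* Main.v *)
Require Import Defs.
From Stdlib Require Import Reals Lra Lia List ClassicalEpsilon FunctionalExtensionality PropExtensionality.
Import ListNotations.
Open Scope R_scope.

Lemma sumL_nil {V} (f : V -> R) : sumL [] f = 0.
Proof. reflexivity. Qed.
Lemma sumL_cons {V} (a : V) s f : sumL (a :: s) f = f a + sumL s f.
Proof. reflexivity. Qed.
Lemma sumL_app {V} (s t : list V) f : sumL (s ++ t) f = sumL s f + sumL t f.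
Proof. induction s; simpl; [lra|]. unfold sumL in *; simpl. rewrite IHs; lra. Qed.
Lemma sumL_ext {V} (s : list V) f g : (forall u, In u s -> f u = g u) -> sumL s f = sumL s g.
Proof. induction s; intros H; simpl; auto. unfold sumL in *; simpl. rewrite H by (left; auto).
  rewrite IHs; auto. intros; apply H; right; auto. Qed.
Lemma sumL_plus {V} (s : list V) f g : sumL s (fun u => f u + g u) = sumL s f + sumL s g.
Proof. induction s; unfold sumL in *; simpl; [lra|]. rewrite IHs; lra. Qed.
Lemma sumL_minus {V} (s : list V) f g : sumL s (fun u => f u - g u) = sumL s f - sumL s g.
Proof. induction s; unfold sumL in *; simpl; [lra|]. rewrite IHs; lra. Qed.
Lemma sumL_scal {V} (s : list V) c f : sumL s (fun u => c * f u) = c * sumL s f.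
Proof. induction s; unfold sumL in *; simpl; [lra|]. rewrite IHs; lra. Qed.
Lemma sumL_scalr {V} (s : list V) c f : sumL s (fun u => f u * c) = sumL s f * c.
Proof. induction s; unfold sumL in *; simpl; [lra|]. rewrite IHs; lra. Qed.
Lemma sumL_le {V} (s : list V) f g : (forall u, In u s -> f u <= g u) -> sumL s f <= sumL s g.
Proof. induction s; intros H; unfold sumL in *; simpl; [lra|].
  assert (f a <= g a) by (apply H; left; auto).
  assert (fold_right (fun u acc => f u + acc) 0 s <= fold_right (fun u acc => g u + acc) 0 s)
   by (apply IHs; intros; apply H; right; auto). lra. Qed.
Lemma sumL_nonneg {V} (s : list V) f : (forall u, In u s -> 0 <= f u) -> 0 <= sumL s f.
Proof. intros H. replace 0 with (sumL s (fun _ => 0)). apply sumL_le; auto.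
  induction s; unfold sumL in *; simpl; auto. rewrite IHs; [lra|]. intros; apply H; right; auto. Qed.
Lemma sumL_zero {V} (s : list V) f : (forall u, In u s -> f u = 0) -> sumL s f = 0.
Proof. intros H. induction s; unfold sumL in *; simpl; auto. rewrite IHs, H; [lra|left;auto|].
  intros; apply H; right; auto. Qed.
Lemma sumL_abs {V} (s : list V) f : Rabs (sumL s f) <= sumL s (fun u => Rabs (f u)).
Proof. induction s; unfold sumL in *; simpl. rewrite Rabs_R0; lra.
  eapply Rle_trans. apply Rabs_triang. lra. Qed.
Lemma sumL_ge_term {V} (s : list V) f a : (forall u, In u s -> 0 <= f u) -> In a s -> f a <= sumL s f.
Proof. induction s; intros H Ha; simpl in Ha; [contradiction|]. unfold sumL in *; simpl.
  destruct Ha as [<-|Ha].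
  - assert (0 <= fold_right (fun u acc => f u + acc) 0 s). { apply (sumL_nonneg s f). intros; apply H; right; auto. } lra.
  - assert (f a <= fold_right (fun u acc => f u + acc) 0 s) by (apply IHs; auto; intros; apply H; right; auto).
    assert (0 <= f a0) by (apply H; left; auto). lra. Qed.
Lemma sumL_swap {V} (s t : list V) (F : V -> V -> R) :
  sumL s (fun u => sumL t (fun v => F u v)) = sumL t (fun v => sumL s (fun u => F u v)).
Proof. induction s.
  - rewrite sumL_nil. symmetry; apply sumL_zero; auto.
  - rewrite sumL_cons, IHs. rewrite <- sumL_plus. apply sumL_ext; intros; rewrite sumL_cons; auto. Qed.
Lemma sumL_zero_term {V} (s : list V) f a : (forall u, In u s -> 0 <= f u) -> sumL s f = 0 -> In a s -> f a = 0.
Proof. intros H1 H2 H3. pose proof (sumL_ge_term s f a H1 H3). pose proof (H1 a H3). lra. Qed.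
Lemma sumL_nz {V} (s : list V) f : sumL s f <> 0 -> exists u, In u s /\ f u <> 0.
Proof. intros H. destruct (classic (exists u, In u s /\ f u <> 0)) as [|N]; auto.
  exfalso; apply H; apply sumL_zero. intros u Hu. destruct (Req_dec (f u) 0); auto.
  exfalso; apply N; eauto. Qed.

Lemma sumL_set {V} (A B : list V) f : NoDup A -> NoDup B ->
  (forall u, f u <> 0 -> (In u A <-> In u B)) -> sumL A f = sumL B f.
Proof.
  revert B. induction A as [|w A IH]; intros B HA HB H.
  - simpl. symmetry. apply sumL_zero. intros u Hu. destruct (Req_dec (f u) 0); auto.
    apply H in H0. apply H0 in Hu. destruct Hu.
  - inversion HA; subst. rewrite sumL_cons.
    destruct (classic (In w B)) as [Hw|Hw].
    + destruct (in_split _ _ Hw) as [B1 [B2 ->]].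
      rewrite sumL_app, sumL_cons.
      assert (HB' : NoDup (B1 ++ B2)) by (eapply NoDup_remove_1; eauto).
      assert (Hw' : ~ In w (B1 ++ B2)) by (eapply NoDup_remove_2; eauto).
      rewrite (IH (B1 ++ B2)); auto. rewrite sumL_app; lra.
      intros u Hu. specialize (H u Hu). split.
      * intros Hi. assert (In u (B1 ++ w :: B2)) by (apply H; right; auto).
        apply in_app_or in H0. apply in_or_app. destruct H0 as [|[<-|]]; auto. contradiction.
      * intros Hi. assert (In u (w :: A)). { apply H. apply in_app_or in Hi; apply in_or_app.
          destruct Hi; auto; right; right; auto. }
        destruct H0 as [<-|]; auto. contradiction.
    + assert (f w = 0). { destruct (Req_dec (f w) 0); auto. exfalso; apply Hw. apply H; auto. left; auto. }
      rewrite H0, (IH B); auto. lra. intros u Hu. specialize (H u Hu). split.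
      * intros; apply H; right; auto.
      * intros Hi. apply H in Hi. destruct Hi as [<-|]; auto. exfalso; apply Hw. apply H; auto; left; auto.
Qed.

Definition Vdec {V : Type} : forall x y : V, {x = y} + {x <> y} :=
  fun x y => excluded_middle_informative (x = y).

Lemma union_ex {V} (s t : list V) : exists u, NoDup u /\ incl s u /\ incl t u.
Proof. exists (nodup Vdec (s ++ t)). split. apply NoDup_nodup.
  split; intros a Ha; apply nodup_In; apply in_or_app; auto. Qed.

Lemma supported_incl {V} (x : V -> R) s t : supported x s -> incl s t -> supported x t.
Proof. intros H1 H2 u Hu; auto. Qed.

Lemma dsum_set {V} (dh : V -> V -> R) s t x y : NoDup s -> NoDup t ->
  supported x s -> supported y s -> supported x t -> supported y t ->
  dsum dh s x y = dsum dh t x y.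
Proof. intros. unfold dsum.
  transitivity (sumL s (fun u => sumL t (fun v => x u * y v * dh u v))).
  - apply sumL_ext; intros u _. apply sumL_set; auto.
    intros v Hv. assert (y v <> 0) by (intro E; apply Hv; rewrite E; ring). split; auto.
  - apply sumL_set; auto. intros u Hu.
    assert (x u <> 0). { intro E; apply Hu. apply sumL_zero. intros; rewrite E; ring. }
    split; auto.
Qed.

Lemma Dhat_eq {V} (dh : V -> V -> R) s x y : NoDup s -> supported x s -> supported y s ->
  Dhat dh x y = dsum dh s x y.
Proof. intros. unfold Dhat.
  destruct (epsilon_spec (inhabits 0) (fun r => exists s, NoDup s /\ supported x s /\
           supported y s /\ r = dsum dh s x y)) as [s' [G1 [G2 [G3 G4]]]].
  exists (dsum dh s x y), s; auto.
  rewrite G4. apply dsum_set; auto. Qed.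

Lemma inX_sum {V} (K : SimplicialComplex V) x s : inX K x -> NoDup s -> supported x s -> sumL s x = 1.
Proof. intros [t [Ht1 [Ht2 [Ht3 [Ht4 Ht5]]]]] Hs Hxs. rewrite <- Ht5. apply sumL_set; auto.
  intros u Hu; split; auto. Qed.

Lemma inX_nonneg {V} (K : SimplicialComplex V) x : inX K x -> forall u, 0 <= x u.
Proof. intros [t [_ [_ [_ [H _]]]]]; auto. Qed.

Lemma common2 {V} (K : SimplicialComplex V) x y : inX K x -> inX K y ->
  exists s, NoDup s /\ supported x s /\ supported y s.
Proof. intros [t1 [_ [N1 [S1 _]]]] [t2 [_ [N2 [S2 _]]]].
  destruct (union_ex t1 t2) as [u [N [I1 I2]]]. exists u; repeat split; auto;
  eapply supported_incl; eauto. Qed.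

Lemma common_l {V} (K : SimplicialComplex V) x s0 : inX K x -> NoDup s0 ->
  exists s, NoDup s /\ supported x s /\ incl s0 s.
Proof. intros [t1 [_ [N1 [S1 _]]]] N0.
  destruct (union_ex t1 s0) as [u [N [I1 I2]]]. exists u; repeat split; auto;
  eapply supported_incl; eauto. Qed.

Lemma dsum_nonneg {V} (dh : V -> V -> R) s x y : (forall u v, 0 <= dh u v) ->
  (forall u, 0 <= x u) -> (forall u, 0 <= y u) -> 0 <= dsum dh s x y.
Proof. intros. unfold dsum. apply sumL_nonneg; intros; apply sumL_nonneg; intros.
  repeat apply Rmult_le_pos; auto. Qed.

Lemma dsum_sym {V} (dh : V -> V -> R) s x y : (forall u v, dh u v = dh v u) ->
  dsum dh s x y = dsum dh s y x.
Proof. intros. unfold dsum. rewrite sumL_swap. apply sumL_ext; intros; apply sumL_ext; intros.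
  rewrite H; ring. Qed.

Lemma edge_bound {V} (K : SimplicialComplex V) dh C s u v :
  is_metric_on (fun _ : V => True) dh -> 0 < C ->
  (forall u v n, dG_is K u v n -> dh u v <= C * INR n) ->
  face K s -> In u s -> In v s -> dh u v <= C.
Proof. intros [H0 [H1 _]] HC Hlip Hs Hu Hv.
  destruct (classic (u = v)) as [->|Ne].
  - assert (dh v v = 0) by (apply H1; auto). lra.
  - assert (F : face K [u; v]). { apply (face_sub K) with s; auto.
      intros a [<-|[<-|[]]]; auto. discriminate. }
    replace C with (C * INR 1) by (simpl; ring). apply Hlip. split.
    + econstructor; eauto. constructor.
    + intros m Hm. inversion Hm; subst. contradiction. lia.
Qed.

Lemma dsig_nonneg {V} (s : list V) x y : 0 <= dsig s x y.
Proof. unfold dsig. apply Rmult_le_pos; [lra|]. apply sumL_nonneg; intros; apply Rabs_pos. Qed.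

Lemma dsig_sym {V} (s : list V) x y : dsig s x y = dsig s y x.
Proof. unfold dsig. f_equal. apply sumL_ext; intros; apply Rabs_minus_sym. Qed.

Lemma path_inX {V} (K : SimplicialComplex V) x z L : pathlen K x z L -> inX K x /\ inX K z.
Proof. induction 1; intuition. Qed.

Lemma path_nonneg {V} (K : SimplicialComplex V) x z L : pathlen K x z L -> 0 <= L.
Proof. induction 1. lra. pose proof (dsig_nonneg s x y). lra. Qed.

Lemma path_eq {V} (K : SimplicialComplex V) x z L L' : pathlen K x z L -> L = L' -> pathlen K x z L'.
Proof. intros H ->; auto. Qed.

Lemma path_app {V} (K : SimplicialComplex V) x y z L1 L2 :
  pathlen K x y L1 -> pathlen K y z L2 -> pathlen K x z (L1 + L2).
Proof. induction 1; intros Hyz.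
  - eapply path_eq; [exact Hyz|ring].
  - eapply path_eq. econstructor; eauto. ring. Qed.

Lemma path_rev {V} (K : SimplicialComplex V) x z L : pathlen K x z L -> pathlen K z x L.
Proof. induction 1.
  - constructor; auto.
  - assert (pathlen K y x (dsig s y x + 0)) by (econstructor; eauto; constructor; auto).
    eapply path_eq. eapply path_app; eauto. rewrite dsig_sym; ring. Qed.

Lemma step_phi {V} (K : SimplicialComplex V) (A : list V) g s a b :
  NoDup A -> NoDup s -> inX K a -> inX K b -> supported a s -> supported b s ->
  (forall u, 0 <= g u <= 1) ->
  Rabs (sumL A (fun u => g u * a u) - sumL A (fun u => g u * b u)) <= dsig s a b.
Proof. intros NA Ns Ha Hb Sa Sb Hg.
  set (h := fun u => if excluded_middle_informative (In u A) then g u * (a u - b u) else 0).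
  rewrite <- sumL_minus.
  assert (E1 : sumL A (fun u => g u * a u - g u * b u) = sumL A h).
  { apply sumL_ext; intros u Hu. unfold h. destruct excluded_middle_informative; [ring|contradiction]. }
  assert (E2 : sumL A h = sumL s h).
  { apply sumL_set; auto. intros u Hu. unfold h in Hu. destruct excluded_middle_informative as [Hi|]; [|lra].
    split; auto. intros _. destruct (Req_dec (a u) 0) as [E|E]; auto.
    destruct (Req_dec (b u) 0) as [E'|E']; auto. rewrite E, E' in Hu; lra. }
  assert (Z : sumL s (fun u => a u - b u) = 0).
  { rewrite sumL_minus. rewrite (inX_sum K a s), (inX_sum K b s); auto; ring. }
  assert (E3 : sumL s h = sumL s (fun u => h u - /2 * (a u - b u))).
  { rewrite sumL_minus, sumL_scal, Z. ring. }
  rewrite E1, E2, E3. eapply Rle_trans. apply sumL_abs. unfold dsig. rewrite <- sumL_scal.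
  apply sumL_le. intros u _. unfold h. destruct excluded_middle_informative.
  - specialize (Hg u). replace (g u * (a u - b u) - / 2 * (a u - b u)) with ((g u - /2) * (a u - b u)) by ring.
    rewrite Rabs_mult. apply Rmult_le_compat_r. apply Rabs_pos.
    apply Rabs_le; lra.
  - replace (0 - / 2 * (a u - b u)) with (-/2 * (a u - b u)) by ring. rewrite Rabs_mult.
    rewrite Rabs_Ropp, Rabs_pos_eq by lra. lra.
Qed.

Lemma path_phi {V} (K : SimplicialComplex V) (A : list V) g a b L :
  NoDup A -> (forall u, 0 <= g u <= 1) -> pathlen K a b L ->
  Rabs (sumL A (fun u => g u * a u) - sumL A (fun u => g u * b u)) <= L.
Proof. intros NA Hg. induction 1.
  - unfold Rminus; rewrite Rplus_opp_r, Rabs_R0; lra.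
  - pose proof (step_phi K A g s x y NA H0 H1 H2 H3 H4 Hg).
    eapply Rle_trans. 2: apply Rplus_le_compat; [apply H6|apply IHpathlen].
    replace (sumL A (fun u => g u * x u) - sumL A (fun u => g u * z u)) with
      ((sumL A (fun u => g u * x u) - sumL A (fun u => g u * y u)) + (sumL A (fun u => g u * y u) - sumL A (fun u => g u * z u))) by ring.
    apply Rabs_triang.
Qed.

Lemma inf_exists (E : R -> Prop) : (exists L, E L) -> (forall L, E L -> 0 <= L) -> exists m, is_inf E m.
Proof. intros [L0 HL0] Hpos.
  destruct (completeness (fun r => E (- r))) as [l [Hl1 Hl2]].
  - exists 0. intros r Hr. apply Hpos in Hr. lra.
  - exists (- L0). rewrite Ropp_involutive; auto.
  - exists (- l). split.
    + intros r Hr. assert (- r <= l) by (apply Hl1; rewrite Ropp_involutive; auto). lra.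
    + intros b Hb. assert (l <= - b). { apply Hl2. intros r Hr. apply Hb in Hr. lra. } lra.
Qed.

Lemma dX_some {V} (K : SimplicialComplex V) x y : (exists L, pathlen K x y L) ->
  exists r, dX K x y = Some r /\ is_inf (pathlen K x y) r.
Proof. intros H. unfold dX. destruct excluded_middle_informative; [|contradiction].
  eexists; split; [reflexivity|]. apply epsilon_spec.
  apply inf_exists; auto. intros; eapply path_nonneg; eauto. Qed.

Lemma dX_none {V} (K : SimplicialComplex V) x y : ~ (exists L, pathlen K x y L) -> dX K x y = None.
Proof. intros H. unfold dX. destruct excluded_middle_informative; [contradiction|auto]. Qed.

Lemma dX_sym {V} (K : SimplicialComplex V) x y : dX K x y = dX K y x.
Proof. assert (pathlen K x y = pathlen K y x).
  { apply functional_extensionality; intros L; apply propositional_extensionality; split; apply path_rev. }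
  unfold dX; rewrite H; auto. Qed.

Lemma dsum_inner {V} (dh : V -> V -> R) T s x a : NoDup T -> NoDup s -> incl s T -> supported a s ->
  dsum dh T x a = sumL T (fun u => x u * sumL s (fun v => a v * dh u v)).
Proof. intros NT Ns I Sa. unfold dsum. apply sumL_ext; intros u _.
  rewrite <- sumL_scal. rewrite (sumL_ext s (fun v => x u * (a v * dh u v)) (fun v => x u * a v * dh u v)) by (intros; ring).
  symmetry. apply sumL_set; auto.
  intros v Hv. assert (a v <> 0) by (intro E; apply Hv; rewrite E; ring). split; auto. Qed.

Lemma lip_step {V} (K : SimplicialComplex V) dh C x s a b :
  is_metric_on (fun _ : V => True) dh -> 0 < C ->
  (forall u v n, dG_is K u v n -> dh u v <= C * INR n) ->
  inX K x -> face K s -> NoDup s -> inX K a -> inX K b -> supported a s -> supported b s ->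
  Dhat dh x b <= Dhat dh x a + 2 * C * dsig s a b.
Proof. intros Hdh HC Hlip Hx Fs Ns Ha Hb Sa Sb.
  pose proof Hdh as [Hd0 [Hd1 [Hd2 Hd3]]].
  destruct (common_l K x s Hx Ns) as [T [NT [Sx I]]].
  rewrite (Dhat_eq dh T x b), (Dhat_eq dh T x a); auto; try (eapply supported_incl; eauto).
  rewrite (dsum_inner dh T s x a), (dsum_inner dh T s x b); auto.
  destruct s as [|v0 s']. { exfalso; eapply face_nonempty; eauto. }
  set (s := v0 :: s') in *.
  assert (Z : sumL s (fun v => b v - a v) = 0).
  { rewrite sumL_minus, (inX_sum K a s), (inX_sum K b s); auto; ring. }
  assert (Q : forall u, sumL s (fun v => b v * dh u v) <= sumL s (fun v => a v * dh u v) + 2 * C * dsig s a b).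
  { intros u.
    assert (E : sumL s (fun v => b v * dh u v) - sumL s (fun v => a v * dh u v) =
                sumL s (fun v => (b v - a v) * (dh u v - dh u v0))).
    { rewrite <- sumL_minus. replace (sumL s (fun v => (b v - a v) * (dh u v - dh u v0))) with
        (sumL s (fun v => (b v * dh u v - a v * dh u v) - (b v - a v) * dh u v0)).
      rewrite (sumL_minus s (fun v => b v * dh u v - a v * dh u v)).
      rewrite (sumL_scalr s (dh u v0) (fun v => b v - a v)), Z. ring.
      apply sumL_ext; intros; ring. }
    assert (sumL s (fun v => (b v - a v) * (dh u v - dh u v0)) <= 2 * C * dsig s a b).
    { unfold dsig. replace (2 * C * (/2 * sumL s (fun u0 => Rabs (a u0 - b u0)))) with
        (sumL s (fun v => Rabs (b v - a v) * C)).
      2:{ rewrite sumL_scalr. rewrite (sumL_ext s (fun v => Rabs (b v - a v)) (fun v => Rabs (a v - b v))) by (intros; apply Rabs_minus_sym). field. }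
      apply sumL_le. intros v Hv.
      eapply Rle_trans. apply Rle_abs. rewrite Rabs_mult. apply Rmult_le_compat_l. apply Rabs_pos.
      assert (dh v v0 <= C) by (eapply edge_bound; eauto; left; auto).
      assert (dh u v <= dh u v0 + dh v0 v) by (apply Hd3; auto).
      assert (dh u v0 <= dh u v + dh v v0) by (apply Hd3; auto).
      rewrite (Hd2 v0 v) in *; auto. apply Rabs_le; lra. }
    lra. }
  assert (sumL T (fun u => x u * sumL s (fun v => b v * dh u v)) <=
          sumL T (fun u => x u * sumL s (fun v => a v * dh u v) + x u * (2 * C * dsig s a b))).
  { apply sumL_le; intros u _. pose proof (inX_nonneg K x Hx u). specialize (Q u).
    rewrite <- Rmult_plus_distr_l. apply Rmult_le_compat_l; auto. }
  rewrite sumL_plus, sumL_scalr, (inX_sum K x T) in H; auto. lra.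
Qed.

Lemma lip_path {V} (K : SimplicialComplex V) dh C x a b L :
  is_metric_on (fun _ : V => True) dh -> 0 < C ->
  (forall u v n, dG_is K u v n -> dh u v <= C * INR n) ->
  inX K x -> pathlen K a b L -> Dhat dh x b <= Dhat dh x a + 2 * C * L.
Proof. intros Hdh HC Hlip Hx. induction 1. lra.
  pose proof (lip_step K dh C x s x0 y Hdh HC Hlip Hx H H0 H1 H2 H3 H4). lra. Qed.

Lemma common3 {V} (K : SimplicialComplex V) x y z : inX K x -> inX K y -> inX K z ->
  exists s, NoDup s /\ supported x s /\ supported y s /\ supported z s.
Proof. intros Hx Hy Hz. destruct (common2 K x y Hx Hy) as [s1 [N1 [S1 S2]]].
  destruct (common_l K z s1 Hz N1) as [s [N [S3 I]]]. exists s; repeat split; auto;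
  eapply supported_incl; eauto. Qed.

Lemma Dhat_tri {V} (K : SimplicialComplex V) dh x y z :
  is_metric_on (fun _ : V => True) dh -> inX K x -> inX K y -> inX K z ->
  Dhat dh x z <= Dhat dh x y + Dhat dh y z.
Proof. intros [Hd0 [Hd1 [Hd2 Hd3]]] Hx Hy Hz.
  destruct (common3 K x y z Hx Hy Hz) as [T [NT [Sx [Sy Sz]]]].
  rewrite !(Dhat_eq dh T) by auto.
  pose proof (inX_sum K x T Hx NT Sx) as X1.
  pose proof (inX_sum K y T Hy NT Sy) as Y1.
  pose proof (inX_sum K z T Hz NT Sz) as Z1.
  pose proof (inX_nonneg K x Hx). pose proof (inX_nonneg K y Hy). pose proof (inX_nonneg K z Hz).
  assert (A : dsum dh T x z = sumL T (fun u => sumL T (fun w => sumL T (fun v => x u * y v * z w * dh u w)))).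
  { unfold dsum. apply sumL_ext; intros u _; apply sumL_ext; intros w _.
    rewrite (sumL_ext T (fun v => x u * y v * z w * dh u w) (fun v => (x u * z w * dh u w) * y v)) by (intros; ring).
    rewrite sumL_scal, Y1. ring. }
  assert (B : dsum dh T x y = sumL T (fun u => sumL T (fun w => sumL T (fun v => x u * y v * z w * dh u v)))).
  { unfold dsum. apply sumL_ext; intros u _. rewrite sumL_swap. apply sumL_ext; intros v _.
    rewrite (sumL_ext T (fun w => x u * y v * z w * dh u v) (fun w => (x u * y v * dh u v) * z w)) by (intros; ring).
    rewrite sumL_scal, Z1. ring. }
  assert (Cq : dsum dh T y z = sumL T (fun u => sumL T (fun w => sumL T (fun v => x u * y v * z w * dh v w)))).
  { rewrite (sumL_ext T (fun u => sumL T (fun w => sumL T (fun v => x u * y v * z w * dh v w)))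
       (fun u => sumL T (fun v => sumL T (fun w => x u * y v * z w * dh v w)))) by (intros; apply sumL_swap).
    rewrite sumL_swap. unfold dsum. apply sumL_ext; intros v _.
    rewrite sumL_swap. apply sumL_ext; intros w _.
    rewrite (sumL_ext T (fun u => x u * y v * z w * dh v w) (fun u => (y v * z w * dh v w) * x u)) by (intros; ring).
    rewrite sumL_scal, X1. ring. }
  rewrite A, B, Cq. rewrite <- sumL_plus. apply sumL_le; intros u _.
  rewrite <- sumL_plus. apply sumL_le; intros w _.
  rewrite <- sumL_plus. apply sumL_le; intros v _.
  rewrite <- Rmult_plus_distr_l. apply Rmult_le_compat_l.
  repeat apply Rmult_le_pos; auto. apply Hd3; auto.
Qed.

Lemma Dhat_self {V} (K : SimplicialComplex V) dh C x :
  is_metric_on (fun _ : V => True) dh -> 0 < C ->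
  (forall u v n, dG_is K u v n -> dh u v <= C * INR n) ->
  inX K x -> Dhat dh x x <= C.
Proof. intros Hdh HC Hlip Hx. pose proof Hx as [s [Fs [Ns [Ss [Pos S1]]]]].
  rewrite (Dhat_eq dh s) by auto. unfold dsum.
  apply Rle_trans with (sumL s (fun u => sumL s (fun v => C * x u * x v))).
  - apply sumL_le; intros u Hu; apply sumL_le; intros v Hv.
    replace (C * x u * x v) with ((x u * x v) * C) by ring. apply Rmult_le_compat_l.
    apply Rmult_le_pos; auto. eapply edge_bound; eauto.
  - rewrite (sumL_ext s (fun u => sumL s (fun v => C * x u * x v)) (fun u => (C * x u) * 1)).
    rewrite sumL_scalr, sumL_scal, S1. lra.
    intros u _. rewrite sumL_scal, S1. ring.
Qed.

Lemma Dhat_pos {V} (K : SimplicialComplex V) dh x y :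
  is_metric_on (fun _ : V => True) dh -> inX K x -> inX K y -> 0 <= Dhat dh x y.
Proof. intros [Hd0 _] Hx Hy. destruct (common2 K x y Hx Hy) as [T [NT [Sx Sy]]].
  rewrite (Dhat_eq dh T) by auto. apply dsum_nonneg; auto; eapply inX_nonneg; eauto. Qed.

Lemma Dhat_symm {V} (K : SimplicialComplex V) dh x y :
  is_metric_on (fun _ : V => True) dh -> inX K x -> inX K y -> Dhat dh x y = Dhat dh y x.
Proof. intros [Hd0 [_ [Hd2 _]]] Hx Hy. destruct (common2 K x y Hx Hy) as [T [NT [Sx Sy]]].
  rewrite !(Dhat_eq dh T) by auto. apply dsum_sym; auto. Qed.

Lemma Dhat_zero {V} (K : SimplicialComplex V) dh x y :
  is_metric_on (fun _ : V => True) dh -> inX K x -> inX K y -> Dhat dh x y = 0 -> x = y.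
Proof. intros [Hd0 [Hd1 [Hd2 _]]] Hx Hy H0. destruct (common2 K x y Hx Hy) as [T [NT [Sx Sy]]].
  rewrite (Dhat_eq dh T) in H0 by auto. unfold dsum in H0.
  pose proof (inX_sum K x T Hx NT Sx) as X1.
  pose proof (inX_sum K y T Hy NT Sy) as Y1.
  pose proof (inX_nonneg K x Hx). pose proof (inX_nonneg K y Hy).
  assert (Key : forall u v, x u <> 0 -> y v <> 0 -> u = v).
  { intros u v Hu Hv. apply (Hd1 u v); auto.
    assert (Iu : In u T) by auto. assert (Iv : In v T) by auto.
    assert (E1 : sumL T (fun v => x u * y v * dh u v) = 0).
    { eapply (sumL_zero_term T (fun u => sumL T (fun v => x u * y v * dh u v))); eauto.
      intros; apply sumL_nonneg; intros; repeat apply Rmult_le_pos; auto. }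
    assert (E2 : x u * y v * dh u v = 0).
    { eapply (sumL_zero_term T (fun v => x u * y v * dh u v)); eauto.
      intros; repeat apply Rmult_le_pos; auto. }
    apply Rmult_integral in E2. destruct E2 as [E2|E2]; auto.
    apply Rmult_integral in E2. destruct E2; contradiction. }
  destruct (sumL_nz T y) as [v0 [Iv0 Hv0]]. lra.
  assert (Ex : forall u, x u <> 0 -> u = v0) by (intros; apply Key; auto).
  assert (Ey : forall u, y u <> 0 -> u = v0).
  { destruct (sumL_nz T x) as [u0 [Iu0 Hu0]]. lra. intros u Hu.
    assert (u0 = u) by (apply Key; auto). assert (u0 = v0) by (apply Key; auto). congruence. }
  assert (Sxv : sumL T x = sumL [v0] x).
  { apply sumL_set; auto. constructor; auto; constructor. intros u Hu. apply Ex in Hu; subst.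
    split; auto; intros; left; auto. }
  assert (Syv : sumL T y = sumL [v0] y).
  { apply sumL_set; auto. constructor; auto; constructor. intros u Hu. apply Ey in Hu; subst.
    split; auto; intros; left; auto. }
  rewrite sumL_cons, sumL_nil in Sxv, Syv.
  apply functional_extensionality; intros w.
  destruct (classic (w = v0)) as [->|Ne]. lra.
  destruct (Req_dec (x w) 0) as [Ew|Ew]; [|exfalso; apply Ne; auto].
  destruct (Req_dec (y w) 0) as [Ew'|Ew']; [|exfalso; apply Ne; auto]. lra.
Qed.

Lemma inf_scaled (E : R -> Prop) r a b k : is_inf E r -> 0 < k ->
  (forall L, E L -> a <= b + k * L) -> a <= b + k * r.
Proof. intros [H1 H2] Hk H.
  assert (T : (a - b) / k <= r).
  { apply H2. intros L HL. specialize (H L HL). set (t := (a - b) / k).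
    assert (k * t = a - b) by (unfold t; field; lra). nra. }
  set (t := (a - b) / k) in T. assert (k * t = a - b) by (unfold t; field; lra). nra. Qed.

Lemma dX_some_inv {V} (K : SimplicialComplex V) x y r : dX K x y = Some r ->
  is_inf (pathlen K x y) r /\ exists L, pathlen K x y L.
Proof. intros H. unfold dX in H. destruct excluded_middle_informative as [e|]; [|discriminate].
  inversion H; subst. split; auto. apply epsilon_spec. apply inf_exists; auto.
  intros; eapply path_nonneg; eauto. Qed.

Lemma phi1 {V} (K : SimplicialComplex V) x y L : pathlen K x y L -> forall w, Rabs (x w - y w) <= L.
Proof. intros H w. pose proof (path_phi K [w] (fun _ => 1) x y L) as P.
  rewrite !sumL_cons, !sumL_nil in P. replace (x w - y w) with (1 * x w + 0 - (1 * y w + 0)) by ring.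
  apply P; auto. constructor; auto; constructor. intros; lra. Qed.

Lemma phi_disj {V} (K : SimplicialComplex V) x y L : pathlen K x y L ->
  (forall u, x u <> 0 -> y u = 0) -> 1 <= L.
Proof. intros H D. pose proof (path_inX K x y L H) as [Hx Hy].
  pose proof Hx as [s [Fs [Ns [Ss [Pos S1]]]]].
  set (g := fun u => if excluded_middle_informative (x u <> 0) then 1 else 0).
  pose proof (path_phi K s g x y L Ns) as P.
  assert (E1 : sumL s (fun u => g u * x u) = 1).
  { rewrite <- S1. apply sumL_ext; intros u _. unfold g. destruct excluded_middle_informative as [|n]. ring.
    destruct (Req_dec (x u) 0) as [e|e]; [rewrite e; ring|contradiction]. }
  assert (E2 : sumL s (fun u => g u * y u) = 0).
  { apply sumL_zero; intros u _. unfold g. destruct excluded_middle_informative as [n|]. rewrite D; auto; ring. ring. }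
  rewrite E1, E2 in P. rewrite Rminus_0_r, Rabs_R1 in P. apply P; auto.
  intros u; unfold g; destruct excluded_middle_informative; lra. Qed.

Theorem mainTheorem6 (V : Type) (K : SimplicialComplex V)
  (dh : V -> V -> R) (C : R)
  (Hdh : is_metric_on (fun _ : V => True) dh)
  (HC : 0 < C)
  (Hlip : forall u v n, dG_is K u v n -> dh u v <= C * INR n) :
  is_metric_on (inX K) (dtilde K dh C) /\
  (forall x y, inX K x -> inX K y ->
     (forall u, x u <> 0 -> y u = 0) ->
     dtilde K dh C x y = Dhat dh x y) /\
  (forall u v, dtilde K dh C (vertex_pt u) (vertex_pt v) = dh u v).
Proof.
  assert (rpos : forall x y r, dX K x y = Some r -> 0 <= r).
  { intros x y r H. apply dX_some_inv in H as [[H1 H2] [L HL]]. apply H2.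
    intros; eapply path_nonneg; eauto. }
  assert (Nonneg : forall x y, inX K x -> inX K y -> 0 <= dtilde K dh C x y).
  { intros x y Hx Hy. pose proof (Dhat_pos K dh x y Hdh Hx Hy). unfold dtilde.
    destruct (dX K x y) eqn:E; auto. apply rpos in E. apply Rmin_glb; auto.
    apply Rmult_le_pos; lra. }
  assert (LeD : forall x y, dtilde K dh C x y <= Dhat dh x y).
  { intros x y. unfold dtilde. destruct (dX K x y); [apply Rmin_l|lra]. }
  assert (LeP : forall x y L, pathlen K x y L -> dtilde K dh C x y <= 3 * C * L).
  { intros x y L HL. destruct (dX_some K x y) as [r [E Hr]]; eauto.
    unfold dtilde. rewrite E. eapply Rle_trans. apply Rmin_r.
    apply Rmult_le_compat_l. lra. apply Hr; auto. }
  assert (Cases : forall x y, dtilde K dh C x y = Dhat dh x y \/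
     exists r, is_inf (pathlen K x y) r /\ (exists L, pathlen K x y L) /\ dtilde K dh C x y = 3 * C * r).
  { intros x y. unfold dtilde. destruct (dX K x y) eqn:E; auto.
    apply dX_some_inv in E as [E1 E2]. unfold Rmin. destruct Rle_dec; auto. right; eauto. }
  assert (Zero : forall x y, inX K x -> inX K y -> (dtilde K dh C x y = 0 <-> x = y)).
  { intros x y Hx Hy. split.
    - intros H. unfold dtilde in H. destruct (dX K x y) eqn:E.
      + apply dX_some_inv in E as [[E1 E2] _]. unfold Rmin in H. destruct Rle_dec.
        * eapply Dhat_zero; eauto.
        * assert (r = 0) by (assert (0 < C) by auto; nra). subst r.
          apply functional_extensionality; intros w.
          assert (Rabs (x w - y w) <= 0). { apply E2. intros L HL; eapply phi1; eauto. }
          pose proof (Rabs_pos (x w - y w)). assert (Rabs (x w - y w) = 0) by lra.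
          destruct (Req_dec (x w - y w) 0) as [Q|Q]; [lra|]. apply Rabs_no_R0 in Q. contradiction.
      + eapply Dhat_zero; eauto.
    - intros <-. destruct (dX_some K x x) as [r [E [Hr1 Hr2]]]. exists 0; constructor; auto.
      assert (r <= 0) by (apply Hr1; constructor; auto).
      assert (0 <= r) by (apply Hr2; intros; eapply path_nonneg; eauto).
      unfold dtilde. rewrite E. replace r with 0 by lra. rewrite Rmult_0_r.
      apply Rmin_right. eapply Dhat_pos; eauto. }
  assert (Part2 : forall x y, inX K x -> inX K y -> (forall u, x u <> 0 -> y u = 0) ->
     dtilde K dh C x y = Dhat dh x y).
  { intros x y Hx Hy D. unfold dtilde. destruct (dX K x y) eqn:E; auto.
    apply dX_some_inv in E as [E1 _]. apply Rmin_left.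
    replace (3 * C * r) with (0 + (3 * C) * r) by ring. apply (inf_scaled _ r _ _ _ E1). lra.
    intros L HL. pose proof (lip_path K dh C x x y L Hdh HC Hlip Hx HL).
    pose proof (Dhat_self K dh C x Hdh HC Hlip Hx). pose proof (phi_disj K x y L HL D). nra. }
  split; [|split; auto].
  - split; [|split; [|split]].
    + auto.
    + auto.
    + intros x y Hx Hy. unfold dtilde. rewrite dX_sym, (Dhat_symm K dh x y); auto.
    + intros x y z Hx Hy Hz.
      destruct (Cases x y) as [Exy|[r1 [Hr1 [[L1 HL1] Exy]]]];
      destruct (Cases y z) as [Eyz|[r2 [Hr2 [[L2 HL2] Eyz]]]]; rewrite Exy, Eyz.
      * eapply Rle_trans. apply LeD. eapply Dhat_tri; eauto.
      * apply (inf_scaled _ r2 _ _ _ Hr2). lra. intros L HL.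
        eapply Rle_trans. apply LeD. pose proof (lip_path K dh C x y z L Hdh HC Hlip Hx HL).
        pose proof (path_nonneg K y z L HL). nra.
      * rewrite Rplus_comm. apply (inf_scaled _ r1 _ _ _ Hr1). lra. intros L HL.
        eapply Rle_trans. apply LeD. pose proof (lip_path K dh C z y x L Hdh HC Hlip Hz (path_rev K x y L HL)).
        pose proof (path_nonneg K x y L HL).
        rewrite (Dhat_symm K dh x z), (Dhat_symm K dh y z) by auto. nra.
      * rewrite Rplus_comm. apply (inf_scaled _ r1 _ _ _ Hr1). lra. intros L HL.
        rewrite Rplus_comm. apply (inf_scaled _ r2 _ _ _ Hr2). lra. intros L' HL'.
        pose proof (LeP x z (L + L') (path_app K x y z L L' HL HL')). nra.
  - intros u v.
    assert (Vx : forall w, inX K (vertex_pt w)).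
    { intros w. exists [w]. repeat split. apply face_vertex. constructor; auto; constructor.
      intros a Ha. unfold vertex_pt in Ha. destruct excluded_middle_informative; [left; auto|lra].
      intros a. unfold vertex_pt; destruct excluded_middle_informative; lra.
      rewrite sumL_cons, sumL_nil. unfold vertex_pt; destruct excluded_middle_informative; [lra|congruence]. }
    destruct (classic (u = v)) as [<-|Ne].
    + pose proof Hdh as [_ [Hd1 _]]. rewrite (proj2 (Hd1 u u I I) eq_refl). apply Zero; auto.
    + rewrite Part2; auto.
      2:{ intros a Ha. unfold vertex_pt in *. destruct excluded_middle_informative; [|lra].
          destruct excluded_middle_informative; [congruence|auto]. }
      rewrite (Dhat_eq dh [u; v]).
      * unfold dsum. rewrite !sumL_cons, !sumL_nil. unfold vertex_pt.
        repeat destruct excluded_middle_informative; try congruence; ring.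
      * constructor. intros [|[]]; auto. constructor; auto; constructor.
      * intros a Ha. unfold vertex_pt in Ha. destruct excluded_middle_informative; [left; auto|lra].
      * intros a Ha. unfold vertex_pt in Ha. destruct excluded_middle_informative; [right; left; auto|lra].
Qed.
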